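(* For every $d\in\mathbb{N}$, the minimum size $n$ of a weighted projective $2$-design $\{x_k\}_{k\in[n]}$ for $\mathbb{C}^d$ equals $\operatorname{ebr}(\mathfrak{Z}_d)$.
   Context: Write $[n]=\{1,\dots,n\}$. Let $\Pi_d^{(2)}$ denote the orthogonal projection of $\mathbb{C}^d\otimes\mathbb{C}^d$ onto its symmetric subspace $(\mathbb{C}^d)^{\otimes 2}_{\mathrm{sym}}$ (which has dimension $\binom{d+1}{2}$). Unit vectors $\{x_k\}_{k\in[n]}$ in $\mathbb{C}^d$ form a weighted projective $2$-design (of size $n$) if there are weights $w_k\ge 0$ with $\sum_{k}w_k=1$ and $\sum_{k\in[n]}w_k(x_k\otimes x_k)(x_k\otimes x_k)^*=\binom{d+1}{2}^{-1}\Pi_d^{(2)}$. A linear map $\Phi:\mathbb{C}^{d\times d}\to\mathbb{C}^{m\times m}$ is entanglement breaking if it admits a decomposition $\Phi(X)=\sum_{k\in[n]}R_kXR_k^*$ for all $X$, with $R_k\in\mathbb{C}^{m\times d}$, $\sum_k R_k^*R_k=I_d$ and $\operatorname{rank}R_k=1$ for every $k$; its entanglement breaking rank $\operatorname{ebr}(\Phi)$ is the smallest such $n$. The map $\mathfrak{Z}_d:\mathbb{C}^{d\times d}\to\mathbb{C}^{d\times d}$ is $\mathfrak{Z}_d(X)=\frac{1}{d+1}(X+\operatorname{tr}(X)\, I_d)$ (it is entanglement breaking). *)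

(* Defs.v *)
From HB Require Import structures.
From mathcomp Require Import all_boot all_order all_algebra.
From mathcomp Require Import complex mxtens.
From mathcomp Require Import reals.
Set Implicit Arguments. Unset Strict Implicit. Unset Printing Implicit Defensive.
Import Order.TTheory GRing.Theory Num.Theory.
Local Open Scope ring_scope.
Local Open Scope complex_scope.

Definition mxadj (C : numClosedFieldType) m n (A : 'M[C]_(m, n)) : 'M[C]_(n, m) :=
  (map_mx Num.conj A)^T.

Definition swap_mx (C : pzRingType) (d : nat) : 'M[C]_(d * d) :=
  \matrix_(a, b) ((((mxtens_unindex a).1 == (mxtens_unindex b).2) &&
                   ((mxtens_unindex a).2 == (mxtens_unindex b).1))%:R).

Definition sym_proj (C : fieldType) (d : nat) : 'M[C]_(d * d) :=
  2%:R^-1 *: (1%:M + swap_mx C d).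

Definition weighted_proj_2design (C : numClosedFieldType) (d n : nat)
  (x : 'I_n -> 'cV[C]_d) : Prop :=
  (forall k, mxadj (x k) *m x k = 1%:M) /\
  exists w : 'I_n -> C,
    (forall k, 0 <= w k) /\ \sum_(k < n) w k = 1 /\
    \sum_(k < n) w k *: ((x k *t x k) *m mxadj (x k *t x k))
      = ('C(d.+1, 2))%:R^-1 *: sym_proj C d.

Definition eb_decomposition (C : numClosedFieldType) (d m : nat)
  (Phi : 'M[C]_d -> 'M[C]_m) (n : nat) (Rk : 'I_n -> 'M[C]_(m, d)) : Prop :=
  (forall X : 'M[C]_d, Phi X = \sum_(k < n) (Rk k *m X *m mxadj (Rk k))) /\
  \sum_(k < n) (mxadj (Rk k) *m Rk k) = 1%:M /\
  (forall k, \rank (Rk k) = 1%N).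

Definition is_min_nat (P : nat -> Prop) (n : nat) : Prop :=
  P n /\ forall n', P n' -> (n <= n')%N.

Definition is_ebr (C : numClosedFieldType) (d m : nat)
  (Phi : 'M[C]_d -> 'M[C]_m) (n : nat) : Prop :=
  is_min_nat (fun n' => exists Rk : 'I_n' -> 'M[C]_(m, d),
                          eb_decomposition Phi Rk) n.

Definition Zmap (C : fieldType) (d : nat) (X : 'M[C]_d) : 'M[C]_d :=
  (d.+1)%:R^-1 *: (X + \tr X *: 1%:M).

(* Main.v *)
Require Import Defs.
From HB Require Import structures.
From mathcomp Require Import all_boot all_order all_algebra.
From mathcomp Require Import complex mxtens.
From mathcomp Require Import reals.
From mathcomp Require Import zify ring lra.
From Stdlib Require Import Classical.
Set Implicit Arguments. Unset Strict Implicit. Unset Printing Implicit Defensive.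
Import Order.TTheory GRing.Theory Num.Theory.
Local Open Scope ring_scope.

Definition unitv (C : numClosedFieldType) d (x : 'cV[C]_d) : Prop :=
  \sum_(t < d) (x t 0)^* * x t 0 = 1.

Definition mom (C : numClosedFieldType) d n (w : 'I_n -> C) (x : 'I_n -> 'cV[C]_d) : Prop :=
  forall a b c e : 'I_d,
  \sum_(k < n) w k * (x k a 0 * x k b 0 * ((x k c 0)^* * (x k e 0)^*)) =
  ((d * d.+1)%:R)^-1 * (((a == c) && (b == e))%:R + ((a == e) && (b == c))%:R).

Lemma unitP (C : numClosedFieldType) d (x : 'cV[C]_d) :
  mxadj x *m x = 1%:M <-> unitv x.
Proof.
rewrite /unitv; split.
  move/matrixP=> /(_ 0 0) H; rewrite !mxE eqxx /= in H; rewrite -[RHS]H.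
  by apply: eq_bigr => t _; rewrite !mxE.
move=> H; apply/matrixP => i j; rewrite !ord1 !mxE eqxx /= -H.
by apply: eq_bigr => t _; rewrite !mxE.
Qed.

Lemma design_entry (C : numClosedFieldType) d n (w : 'I_n -> C) (x : 'I_n -> 'cV[C]_d) a b c e :
  (\sum_(k < n) w k *: ((x k *t x k) *m mxadj (x k *t x k)))
     (mxtens_index (a, b)) (mxtens_index (c, e)) =
  \sum_(k < n) w k * (x k a 0 * x k b 0 * ((x k c 0)^* * (x k e 0)^*)).
Proof.
rewrite summxE; apply: eq_bigr => k _.
rewrite mxE mxE big_ord1 !mxE !mxtens_indexK /= !rmorphM.
by rewrite !(ord1 (Ordinal _)).
Qed.

Lemma binC2 d : ('C(d.+1, 2) * 2 = d * d.+1)%N.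
Proof.
elim: d => [//|d IH]; rewrite binS bin1 mulnDl IH; lia.
Qed.

Lemma sym_entry (C : numClosedFieldType) d (a b c e : 'I_d) :
  (('C(d.+1, 2))%:R^-1 *: sym_proj C d) (mxtens_index (a, b)) (mxtens_index (c, e)) =
  ((d * d.+1)%:R)^-1 * (((a == c) && (b == e))%:R + ((a == e) && (b == c))%:R).
Proof.
rewrite /sym_proj !mxE !mxtens_indexK /= mulrA -invfM -natrM binC2.
by rewrite (inj_eq (can_inj (@mxtens_indexK d d))) xpair_eqE.
Qed.

Lemma design_iff (C : numClosedFieldType) d n (x : 'I_n -> 'cV[C]_d) :
  weighted_proj_2design x <->
  (forall k, unitv (x k)) /\ exists w : 'I_n -> C,
     (forall k, 0 <= w k) /\ \sum_(k < n) w k = 1 /\ mom w x.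
Proof.
rewrite /weighted_proj_2design; split.
  case=> Hu [w [Hw [Hs Hm]]]; split; first by move=> k; apply/unitP.
  exists w; do 2!split => //.
  by move=> a b c e; rewrite -design_entry Hm sym_entry.
case=> Hu [w [Hw [Hs Hm]]]; split; first by move=> k; apply/unitP.
exists w; do 2!split => //.
apply/matrixP => A B.
case: (mxtens_indexP A) => a b; case: (mxtens_indexP B) => c e.
by rewrite design_entry sym_entry Hm.
Qed.

Lemma sum_dl (C : pzRingType) d (F : 'I_d -> C) (a : 'I_d) :
  \sum_(i < d) F i * (i == a)%:R = F a.
Proof.
rewrite (bigD1 a) //= eqxx mulr1 big1 ?addr0 // => i /negbTE ->; by rewrite mulr0.
Qed.

Lemma sum_dr (C : pzRingType) d (F : 'I_d -> C) (a : 'I_d) :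
  \sum_(i < d) F i * (a == i)%:R = F a.
Proof.
rewrite -[RHS](sum_dl F); apply: eq_bigr => i _; by rewrite eq_sym.
Qed.

Definition kmom (C : numClosedFieldType) d n (R : 'I_n -> 'M[C]_d) : Prop :=
  forall a i b j : 'I_d, \sum_(k < n) R k a i * (R k b j)^* =
   (d.+1%:R)^-1 * (((a == i) && (b == j))%:R + ((i == j) && (a == b))%:R).

Lemma kraus_entry (C : numClosedFieldType) d (R X : 'M[C]_d) a b :
  (R *m X *m mxadj R) a b = \sum_(i < d) \sum_(j < d) R a i * X i j * (R b j)^*.
Proof.
rewrite mxE exchange_big /=; apply: eq_bigr => j _.
rewrite !mxE big_distrl /=; apply: eq_bigr => i _; by rewrite /mxadj.
Qed.

Lemma Z_entry (C : fieldType) d (X : 'M[C]_d) (a b : 'I_d) :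
  Zmap X a b = (d.+1%:R)^-1 * (X a b + \tr X * (a == b)%:R).
Proof. by rewrite /Zmap !mxE. Qed.

Lemma tr_delta (C : pzRingType) d (i j : 'I_d) : \tr (delta_mx i j : 'M[C]_d) = (i == j)%:R.
Proof.
rewrite /mxtrace (bigD1 i) //= big1 ?addr0 ?mxE ?eqxx //.
by move=> t /negbTE Ht; rewrite mxE Ht.
Qed.

Lemma sum2_d1 (C : comPzRingType) d (X : 'M[C]_d) (a b : 'I_d) :
  \sum_(i < d) \sum_(j < d) ((a == i) && (b == j))%:R * X i j = X a b.
Proof.
under eq_bigr do (under eq_bigr do rewrite -mulnb natrM mulrAC); rewrite /=.
under eq_bigr do rewrite sum_dr.
by under eq_bigr do rewrite mulrC; rewrite sum_dr.
Qed.

Lemma sum2_d2 (C : comPzRingType) d (X : 'M[C]_d) (a b : 'I_d) :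
  \sum_(i < d) \sum_(j < d) ((i == j) && (a == b))%:R * X i j =
  (\sum_(i < d) X i i) * (a == b)%:R.
Proof.
rewrite big_distrl /=; apply: eq_bigr => i _.
under eq_bigr do rewrite -mulnb natrM mulrC mulrA.
by rewrite -big_distrl /= sum_dr.
Qed.

Lemma kraus_iff (C : numClosedFieldType) d n (R : 'I_n -> 'M[C]_d) :
  (forall X, Zmap X = \sum_(k < n) (R k *m X *m mxadj (R k))) <-> kmom R.
Proof.
split.
  move=> H a i b j.
  transitivity (Zmap (delta_mx i j : 'M[C]_d) a b); last first.
    by rewrite Z_entry tr_delta mxE -natrM mulnb.
  rewrite H summxE; apply: eq_bigr => k _.
  rewrite kraus_entry (bigD1 i) //= (bigD1 j) //= !mxE !eqxx /= mulr1.
  rewrite !big1 ?addr0 // => t /negbTE Ht.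
    by rewrite big1 // => s _; rewrite mxE Ht mulr0 mul0r.
  by rewrite mxE Ht andbF mulr0 mul0r.
move=> H X; apply/matrixP => a b.
rewrite Z_entry summxE.
under eq_bigr do rewrite kraus_entry.
rewrite exchange_big /=.
under eq_bigr do rewrite exchange_big /=.
under eq_bigr do under eq_bigr do
   (under eq_bigr do rewrite mulrAC; rewrite -big_distrl /= H).
rewrite /mxtrace.
under eq_bigr do under eq_bigr do rewrite -mulrA mulrDl.
under eq_bigr do rewrite -mulr_sumr big_split /=.
rewrite -mulr_sumr big_split /= sum2_d1 sum2_d2 //.
Qed.

Lemma mom_marg (C : numClosedFieldType) d n (w : 'I_n -> C) (x : 'I_n -> 'cV[C]_d) :
  (forall k, unitv (x k)) -> mom w x ->
  forall a e, \sum_(k < n) w k * (x k a 0 * (x k e 0)^*) = (d%:R)^-1 * (a == e)%:R.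
Proof.
move=> Hu Hm a e.
transitivity (\sum_(k < n) w k * (x k a 0 * (x k e 0)^*) *
                \sum_(t < d) (x k t 0)^* * x k t 0).
  by apply: eq_bigr => k _; rewrite Hu mulr1.
under eq_bigr do rewrite mulr_sumr.
rewrite exchange_big /=.
transitivity (\sum_(t < d) ((d * d.+1)%:R)^-1 *
   (((a == t) && (t == e))%:R + ((a == e) && (t == t))%:R) :> C).
  apply: eq_bigr => t _; rewrite -Hm; apply: eq_bigr => k _; ring.
rewrite -mulr_sumr big_split /=.
rewrite (bigD1 a) //= eqxx /= big1; last first.
  by move=> t /negbTE Ht; rewrite eq_sym Ht.
rewrite addr0.
under eq_bigr do rewrite eqxx andbT.
rewrite sumr_const card_ord.
case: (a == e); last by rewrite mulr0 mul0rn addr0 mulr0.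
have hd : (0 < d)%N := leq_ltn_trans (leq0n a) (ltn_ord a).
have h1 : (d%:R != 0 :> C) by rewrite pnatr_eq0 -lt0n.
have h2 : (d.+1%:R != 0 :> C) by rewrite pnatr_eq0.
have h3 : (d%:R + 1 != 0 :> C) by rewrite -[1]/(1%:R) -natrD addn1 pnatr_eq0.
rewrite (_ : true%:R = 1) // natrM -mulr_natr mul1r -addn1 natrD.
by field; apply/andP; split.
Qed.

Lemma mom_sum (C : numClosedFieldType) d n (w : 'I_n -> C) (x : 'I_n -> 'cV[C]_d) :
  (0 < d)%N -> (forall k, unitv (x k)) -> mom w x -> \sum_(k < n) w k = 1.
Proof.
move=> hd Hu Hm.
transitivity (\sum_(k < n) w k * \sum_(t < d) (x k t 0)^* * x k t 0).
  by apply: eq_bigr => k _; rewrite Hu mulr1.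
under eq_bigr do rewrite mulr_sumr.
rewrite exchange_big /=.
transitivity (\sum_(t < d) (d%:R)^-1 * (t == t)%:R :> C).
  apply: eq_bigr => t _; rewrite -(mom_marg Hu Hm); apply: eq_bigr => k _.
  by rewrite (mulrC (x k t 0)^*).
under eq_bigr do rewrite eqxx mulr1.
rewrite sumr_const card_ord -(mulr_natr (d%:R^-1)) mulVf //.
by rewrite pnatr_eq0 -lt0n.
Qed.

Lemma rk1_entry (C : numClosedFieldType) d (c : C) (x : 'cV[C]_d) a i :
  (c *: (x *m mxadj x)) a i = c * (x a 0 * (x i 0)^*).
Proof. by rewrite !mxE big_ord1 /mxadj !mxE. Qed.

Lemma kmom_mom (C : numClosedFieldType) d n (c w : 'I_n -> C) (x : 'I_n -> 'cV[C]_d) :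
  (0 < d)%N -> (forall k, w k * d%:R = c k * (c k)^*) ->
  kmom (fun k => c k *: (x k *m mxadj (x k))) <-> mom w x.
Proof.
move=> hd Hw.
have h1 : (d%:R != 0 :> C) by rewrite pnatr_eq0 -lt0n.
have key : forall a i b j : 'I_d,
  \sum_(k < n) (c k *: (x k *m mxadj (x k))) a i * ((c k *: (x k *m mxadj (x k))) b j)^*
  = d%:R * \sum_(k < n) w k * (x k a 0 * x k j 0 * ((x k i 0)^* * (x k b 0)^*)).
  move=> a i b j; rewrite mulr_sumr; apply: eq_bigr => k _.
  rewrite !rk1_entry !rmorphM /= conjCK.
  transitivity (c k * (c k)^* * (x k a 0 * x k j 0 * ((x k i 0)^* * (x k b 0)^*))).
    by ring.
  by rewrite -Hw; ring.
split.
  move=> H a b c' e.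
  have := H a c' e b; rewrite key => /(congr1 (fun t => d%:R^-1 * t)).
  rewrite mulKf // => ->.
  rewrite natrM invfM [e == b]eq_sym (andbC (c' == b)) [c' == b]eq_sym.
  by rewrite -mulrA mulrA (mulrC d%:R^-1).
move=> H a i b j; rewrite key H natrM invfM !mulrA mulfV // mul1r.
by rewrite [j == b]eq_sym (andbC (a == b)) [j == i]eq_sym.
Qed.

Lemma rank_rk1 (C : numClosedFieldType) d (c : C) (x : 'cV[C]_d) :
  c != 0 -> unitv x -> \rank (c *: (x *m mxadj x)) = 1%N.
Proof.
move=> hc hx; apply/eqP; rewrite eqn_leq; apply/andP; split.
  apply: leq_trans (mxrank_scale _ _) _; apply: leq_trans (mxrankM_maxl _ _) _.
  exact: rank_leq_col.
rewrite lt0n mxrank_eq0; apply/eqP => H0.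
have : \tr (c *: (x *m mxadj x)) = c.
  rewrite /mxtrace; under eq_bigr do rewrite rk1_entry.
  by rewrite -mulr_sumr -[RHS]mulr1 -hx; congr (_ * _); apply: eq_bigr => t _; rewrite mulrC.
by rewrite H0 mxtrace0 => /esym/eqP; rewrite (negbTE hc).
Qed.

Lemma sum_pos (C : numClosedFieldType) d n (w : 'I_n -> C) (x : 'I_n -> 'cV[C]_d) :
  (forall k, unitv (x k)) -> (forall k, 0 <= w k) -> \sum_(k < n) w k = 1 ->
  exists (w' : 'I_n -> C) (x' : 'I_n -> 'cV[C]_d),
    (forall k, unitv (x' k)) /\ (forall k, 0 < w' k) /\
    forall g : 'cV[C]_d -> C, \sum_(k < n) w' k * g (x' k) = \sum_(k < n) w k * g (x k).
Proof.
move=> Hu Hw Hs.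
case: (pickP (fun k => w k != 0)) => [k0 Hk0 | H0]; last first.
  exfalso; move: Hs; rewrite big1 => [/eqP|k _]; first by rewrite eq_sym oner_eq0.
  by have := H0 k => /= /negbFE /eqP.
pose P := [pred k | (w k == 0) || (k == k0)].
pose q := #|P|.
have hq : (0 < q)%N by apply/card_gt0P; exists k0; rewrite inE /= eqxx orbT.
have hqC : (q%:R != 0 :> C) by rewrite pnatr_eq0 -lt0n.
have hk0 : 0 < w k0 by rewrite lt_def Hk0 Hw.
exists (fun k => if P k then w k0 / q%:R else w k).
exists (fun k => if w k == 0 then x k0 else x k).
split; first by move=> k; case: ifP.
split.
  move=> k; case: ifP => HP; first by rewrite divr_gt0 // ltr0n.
  by rewrite lt_def Hw andbT; move: HP; rewrite /P /=; case: (w k == 0).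
move=> g.
rewrite [LHS](bigID P) [RHS](bigID P) /=; congr (_ + _); last first.
  by apply: eq_bigr => k HP; rewrite (negbTE HP); move: HP; rewrite /P /= negb_or => /andP [/negbTE -> _].
transitivity (\sum_(k < n | P k) w k0 / q%:R * g (x k0)).
  apply: eq_bigr => k HP; rewrite HP; case: eqP => // Hne.
  by move: HP; rewrite /P /=; case: eqP => //= _ /eqP ->.
rewrite sumr_const; change (w k0 / q%:R * g (x k0) *+ q = \sum_(i < n | P i) w i * g (x i)).
rewrite -mulr_natr mulrAC mulfVK //.
rewrite (bigD1 k0) /=; last by rewrite /P /= eqxx orbT.
rewrite big1 ?addr0 // => k /andP [HP Hk].
by move: HP; rewrite /P /= (negbTE Hk) orbF => /eqP ->; rewrite mul0r.
Qed.

Lemma adj_entry (C : numClosedFieldType) m p (M : 'M[C]_(m, p)) i j :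
  mxadj M i j = (M j i)^*.
Proof. by rewrite /mxadj !mxE. Qed.

Lemma design_to_eb (C : numClosedFieldType) d n (x : 'I_n -> 'cV[C]_d) :
  (0 < d)%N -> weighted_proj_2design x ->
  exists R : 'I_n -> 'M[C]_d, eb_decomposition (@Zmap C d) R.
Proof.
move=> hd /design_iff [Hu [w [Hw [Hs Hm]]]].
have [w' [x' [Hu' [Hw' Hg]]]] := sum_pos Hu Hw Hs.
have Hm' : mom w' x'.
  move=> a b c e; rewrite -(Hm a b c e).
  exact: (Hg (fun y => y a 0 * y b 0 * ((y c 0)^* * (y e 0)^*))).
have hdC : (d%:R != 0 :> C) by rewrite pnatr_eq0 -lt0n.
pose c k := sqrtC (w' k * d%:R).
have Hc : forall k, w' k * d%:R = c k * (c k)^*.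
  move=> k; have h0 : 0 <= w' k * d%:R by rewrite mulr_ge0 ?ler0n // ltW.
  by rewrite /c geC0_conj ?sqrtC_ge0 // -expr2 sqrtCK.
exists (fun k => c k *: (x' k *m mxadj (x' k))).
split; first by apply/kraus_iff; apply/(kmom_mom _ hd Hc).
split; last first.
  move=> k; apply: rank_rk1 => //.
  by rewrite /c sqrtC_eq0 mulf_neq0 // gt_eqF.
apply/matrixP => a b; rewrite summxE [RHS]mxE.
transitivity (\sum_(k < n) d%:R * (w' k * (x' k a 0 * (x' k b 0)^*))).
  apply: eq_bigr => k _; rewrite mxE.
  under eq_bigr do rewrite adj_entry !rk1_entry !rmorphM /= conjCK.
  transitivity ((c k)^* * c k * (x' k a 0 * (x' k b 0)^*) *
                 \sum_(t < d) (x' k t 0)^* * x' k t 0).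
    by rewrite mulr_sumr; apply: eq_bigr => t _; ring.
  by rewrite Hu' mulr1 (mulrC (c k)^*) -Hc; ring.
by rewrite -mulr_sumr (mom_marg Hu' Hm') mulrA mulfV // mul1r.
Qed.

Lemma rank1_fact (C : fieldType) d (A : 'M[C]_d) :
  \rank A = 1%N -> exists (P : 'cV[C]_d) (Q : 'rV[C]_d), A = P *m Q.
Proof.
move=> HA; have := mulmx_base A; move: (col_base A) (row_base A).
rewrite HA => P Q <-; by exists P, Q.
Qed.

Lemma fact_entry (C : pzRingType) d (P : 'cV[C]_d) (Q : 'rV[C]_d) a b :
  (P *m Q) a b = P a 0 * Q 0 b.
Proof. by rewrite mxE big_ord1. Qed.

Lemma eb_sym (C : numClosedFieldType) d n (P : 'I_n -> 'cV[C]_d) (Q : 'I_n -> 'rV[C]_d) :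
  kmom (fun k => P k *m Q k) ->
  forall k x y, P k y 0 * (Q k 0 x)^* = P k x 0 * (Q k 0 y)^*.
Proof.
move=> H.
pose phi k x y := P k y 0 * (Q k 0 x)^*.
have HG : forall x' y' x y, \sum_(k < n) phi k x' y' * (phi k x y)^* =
   (d.+1%:R)^-1 * (((y' == x) && (y == x'))%:R + ((x == x') && (y' == y))%:R).
  move=> x' y' x y; rewrite -H; apply: eq_bigr => k _.
  rewrite !fact_entry /phi !rmorphM /= conjCK; ring.
move=> k x y.
have S0 : \sum_(k < n) (phi k x y - phi k y x) * (phi k x y - phi k y x)^* = 0.
  under eq_bigr do rewrite rmorphB /= mulrBl !mulrBr.
  rewrite !sumrB !HG.
  case: (eqVneq x y) => [->|Hne]; first by rewrite !eqxx /=; ring.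
  have Hne' := Hne; rewrite eq_sym in Hne'.
  by rewrite !eqxx ?(negbTE Hne) ?(negbTE Hne') /=; ring.
have := @psumr_eq0P _ _ _ _ (fun k _ => mul_conjC_ge0 _) S0 k isT.
by move/eqP; rewrite mul_conjC_eq0 subr_eq0 => /eqP.
Qed.

Lemma sym_to_rk1 (C : numClosedFieldType) d (P : 'cV[C]_d) (Q : 'rV[C]_d) :
  P *m Q != 0 -> (forall x y, P y 0 * (Q 0 x)^* = P x 0 * (Q 0 y)^*) ->
  exists (c : C) (x : 'cV[C]_d), unitv x /\ P *m Q = c *: (x *m mxadj x).
Proof.
move=> HPQ Hs.
case: (pickP (fun t => Q 0 t != 0)) => [x0 Hx0|H0]; last first.
  exfalso; move/eqP: HPQ; apply; apply/matrixP => a b; rewrite fact_entry mxE.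
  by have := H0 b => /negbFE /eqP ->; rewrite mulr0.
pose v : 'cV[C]_d := \col_a (Q 0 a)^*.
pose s := \sum_(t < d) (v t 0)^* * v t 0.
have hge : forall t, 0 <= (v t 0)^* * v t 0 by move=> t; rewrite mulrC mul_conjC_ge0.
have s_ge0 : 0 <= s by apply: sumr_ge0 => t _.
have s_neq0 : s != 0.
  apply/eqP => S0.
  have := @psumr_eq0P _ _ _ _ (fun t _ => hge t) S0 x0 isT.
  move/eqP; rewrite mulrC mul_conjC_eq0 /v mxE conjC_eq0.
  by rewrite (negbTE Hx0).
pose nv := sqrtC s.
have nv_ge0 : 0 <= nv by rewrite sqrtC_ge0.
have nv2 : nv ^+ 2 = s by rewrite sqrtCK.
have nv_neq0 : nv != 0 by apply: contraNneq s_neq0 => H; rewrite -nv2 H expr0n.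
pose mu := P x0 0 / (Q 0 x0)^*.
have hq0 : (Q 0 x0)^* != 0 by rewrite conjC_eq0.
exists (mu * s), (nv^-1 *: v).
split.
  rewrite /unitv.
  transitivity (nv^-1 * nv^-1 * s).
    rewrite /s mulr_sumr; apply: eq_bigr => t _.
    rewrite !mxE rmorphM /= geC0_conj ?invr_ge0 //; ring.
  by rewrite -nv2; field.
apply/matrixP => a b; rewrite fact_entry rk1_entry !mxE.
have HPa : P a 0 = mu * (Q 0 a)^*.
  by rewrite /mu mulrAC -Hs mulfK.
rewrite HPa !rmorphM /= conjCK (geC0_conj (x:=nv^-1)) ?invr_ge0 // -nv2.
by field.
Qed.

Lemma eb_to_design (C : numClosedFieldType) d n (R : 'I_n -> 'M[C]_d) :
  (0 < d)%N -> eb_decomposition (@Zmap C d) R ->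
  exists x : 'I_n -> 'cV[C]_d, weighted_proj_2design x.
Proof.
move=> hd [HZ [_ Hrk]].
have HK := (kraus_iff R).1 HZ.
have [PQ HPQ] : exists PQ : 'I_n -> 'cV[C]_d * 'rV[C]_d,
    forall k, R k = (PQ k).1 *m (PQ k).2.
  suff H : forall k, exists p : 'cV[C]_d * 'rV[C]_d, R k = p.1 *m p.2.
    by have [PQ ?] := fin_all_exists H; exists PQ.
  move=> k; have [P [Q ->]] := rank1_fact (Hrk k).
  by exists (P, Q).
have HK' : kmom (fun k => (PQ k).1 *m (PQ k).2).
  by move=> a i b j; rewrite -HK; apply: eq_bigr => k _; rewrite HPQ.
have Hsym := eb_sym (P := fun k => (PQ k).1) (Q := fun k => (PQ k).2) HK'.
have [cx Hcx] : exists cx : 'I_n -> C * 'cV[C]_d,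
    forall k, unitv (cx k).2 /\ R k = (cx k).1 *: ((cx k).2 *m mxadj (cx k).2).
  suff H : forall k, exists p : C * 'cV[C]_d,
      unitv p.2 /\ R k = p.1 *: (p.2 *m mxadj p.2).
    by have [cx ?] := fin_all_exists H; exists cx.
  move=> k.
  have hnz : (PQ k).1 *m (PQ k).2 != 0 by rewrite -HPQ -mxrank_eq0 Hrk.
  have [c [x [Hu He]]] := sym_to_rk1 hnz (Hsym k).
  by exists (c, x); rewrite HPQ.
pose c k := (cx k).1; pose x k := (cx k).2.
exists x; apply/design_iff.
have Hu : forall k, unitv (x k) by move=> k; case: (Hcx k).
pose w k := c k * (c k)^* / d%:R.
have Hw : forall k, w k * d%:R = c k * (c k)^*.
  by move=> k; rewrite /w mulfVK // pnatr_eq0 -lt0n.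
have Hm : mom w x.
  apply/(kmom_mom _ hd Hw) => a i b j; rewrite -HK; apply: eq_bigr => k _.
  by case: (Hcx k) => _ ->.
split=> //; exists w; split.
  by move=> k; rewrite /w divr_ge0 ?mul_conjC_ge0 ?ler0n.
by split=> //; apply: mom_sum hd Hu Hm.
Qed.

Definition mm (T : eqType) (a b c e t : T) : nat :=
  ((t == a) + (t == b) + 3 * (t == c) + 3 * (t == e))%N.



Lemma comb1 (T : eqType) (a b c e : T) :
  (forall t, 4 %| mm a b c e t)%N -> ((a == c) && (b == e)) || ((a == e) && (b == c)).
Proof.
move=> H; move: (H a) (H b); rewrite /mm.
repeat (case: eqP => //= ?; subst; rewrite ?eqxx /=).
Qed.

Lemma comb2 (T : eqType) (a b c e : T) :
  ((a == c) && (b == e)) || ((a == e) && (b == c)) -> (forall t, 4 %| mm a b c e t)%N.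
Proof.
by case/orP => /andP [/eqP -> /eqP ->] t; rewrite /mm; case: (t == _); case: (t == _).
Qed.

Lemma i4 (C : numClosedFieldType) : 'i ^+ 4 = 1 :> C.
Proof. by rewrite -[4%N]/(2 * 2)%N exprM sqrCi sqrrN expr1n. Qed.

Lemma one_neq_m1 (C : numClosedFieldType) : (1 : C) != -1.
Proof.
apply/eqP => H.
have : (2%:R : C) = 0 by rewrite -[2%N]/(1 + 1)%N natrD {1}H addNr.
by move/eqP; rewrite pnatr_eq0.
Qed.

Lemma in1 (C : numClosedFieldType) m : ('i ^+ m == 1 :> C) = (4 %| m)%N.
Proof.
rewrite {1}(divn_eq m 4) exprD (mulnC (m %/ 4)%N) exprM i4 expr1n mul1r.
rewrite /dvdn; have : (m %% 4 < 4)%N by rewrite ltn_pmod.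
case: (m %% 4)%N => [|[|[|[|r]]]] // _.
- by rewrite expr0 eqxx.
- rewrite expr1; apply/eqP => H; have := sqrCi C; rewrite H expr1n.
  by move/eqP; rewrite (negbTE (one_neq_m1 C)).
- by rewrite sqrCi eq_sym (negbTE (one_neq_m1 C)).
- rewrite exprS sqrCi mulrN1; apply/eqP => H.
  have := sqrCi C; rewrite -sqrrN H expr1n.
  by move/eqP; rewrite (negbTE (one_neq_m1 C)).
Qed.

Lemma sumi (C : numClosedFieldType) m :
  \sum_(s < 4) ('i ^+ m) ^+ s = (4 %| m)%:R * 4%:R :> C.
Proof.
case: (boolP (4 %| m)%N) => H.
  have /eqP -> : ('i ^+ m == 1 :> C) by rewrite in1.
  by rewrite mul1r; under eq_bigr do rewrite expr1n; rewrite sumr_const card_ord.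
rewrite mul0r.
have h1 : ('i ^+ m - 1 != 0 :> C) by rewrite subr_eq0 in1.
have : ('i ^+ m - 1) * \sum_(s < 4) ('i ^+ m) ^+ s = 0 :> C.
  by rewrite -subrX1 -exprM mulnC exprM i4 expr1n subrr.
by move/eqP; rewrite mulf_eq0 (negbTE h1) /= => /eqP.
Qed.

Lemma nat_dl d (F : 'I_d -> nat) (a : 'I_d) : (\sum_(t < d) F t * (t == a) = F a)%N.
Proof.
rewrite (bigD1 a) //= eqxx muln1 big1 ?addn0 // => t /negbTE ->; by rewrite muln0.
Qed.

Lemma prod_bool (C : numClosedFieldType) d (P : 'I_d -> bool) :
  \prod_(t < d) (P t)%:R = ([forall t, P t])%:R :> C.
Proof.
case: (boolP [forall t, P t]) => [/forallP H|].
  by rewrite big1 // => t _; rewrite H.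
rewrite negb_forall => /existsP [t Ht].
by rewrite (bigD1 t) //= (negbTE Ht) mul0r.
Qed.

Lemma conj_i (C : numClosedFieldType) n : ('i ^+ n)^* = 'i ^+ (3 * n) :> C.
Proof.
by rewrite rmorphXn /= conjCi exprM exprS sqrCi mulrN1.
Qed.

Lemma phase_sum (C : numClosedFieldType) d (a b c e : 'I_d) :
  \sum_(f : {ffun 'I_d -> 'I_4})
     'i ^+ (f a) * 'i ^+ (f b) * (('i ^+ (f c))^* * ('i ^+ (f e))^*) =
  (4 ^ d)%:R * ([forall t, 4 %| mm a b c e t]%N)%:R :> C.
Proof.
transitivity (\sum_(f : {ffun 'I_d -> 'I_4}) \prod_(t < d) ('i ^+ mm a b c e t) ^+ (f t) : C).
  apply: eq_bigr => f _; rewrite !conj_i -!exprD.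
  under eq_bigr do rewrite -exprM mulnC.
  rewrite prodrXr; congr (_ ^+ _).
  rewrite /mm; under eq_bigr do rewrite !mulnDr.
  rewrite !big_split /= !nat_dl.
  have z : (\sum_(i < d) f i * 0 = 0)%N by rewrite big1 // => i _; rewrite muln0.
  rewrite z; lia.
rewrite -(bigA_distr_bigA (fun t (s : 'I_4) => ('i ^+ mm a b c e t) ^+ s)) /=.
under eq_bigr do rewrite sumi.
by rewrite big_split /= prod_bool prodr_const card_ord natrX mulrC.
Qed.

Lemma comb3 (T : eqType) (a b c e : T) :
  ((b == a) * ((c == a) * (e == a)) + (((a == c) && (b == e)) || ((a == e) && (b == c))) =
   ((a == c) && (b == e)) + ((a == e) && (b == c)))%N.
Proof.
repeat (let H := fresh "H" in case: eqP => [?|H]; [subst|]; rewrite ?eqxx /=) => //; try congruence.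
Qed.

Lemma reindex (C : numClosedFieldType) (T : finType) (F : T -> C) :
  \sum_(k < #|T|) F (enum_val k) = \sum_(t : T) F t.
Proof. by rewrite (big_enum_val (A := T)). Qed.

Lemma design_exists (C : numClosedFieldType) d :
  (0 < d)%N -> exists n (x : 'I_n -> 'cV[C]_d), weighted_proj_2design x.
Proof.
move=> hd.
pose T := ('I_d + {ffun 'I_d -> 'I_4})%type.
pose sg : C := sqrtC d%:R.
have hdC : (d%:R != 0 :> C) by rewrite pnatr_eq0 -lt0n.
have sg_ge0 : 0 <= sg by rewrite sqrtC_ge0 ler0n.
have sg2 : sg ^+ 2 = d%:R by rewrite sqrtCK.
have sg_neq0 : sg != 0 by apply: contraNneq hdC => H; rewrite -sg2 H expr0n.
have hconj : forall n, ('i ^+ n)^* * 'i ^+ n = 1 :> C.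
  by move=> n; rewrite conj_i -exprD -mulSnr exprM i4 expr1n.
pose y (t : T) : 'cV[C]_d := match t with
   | inl i => \col_a (a == i)%:R
   | inr f => \col_a ('i ^+ f a / sg) end.
pose u (t : T) : C := match t with
   | inl _ => ((d * d.+1)%:R)^-1
   | inr _ => d%:R / (d.+1%:R * (4 ^ d)%:R) end.
have Hu : forall t, unitv (y t).
  case=> [i|f]; rewrite /unitv.
    under eq_bigr do rewrite mxE rmorph_nat.
    by rewrite (bigD1 i) //= eqxx mulr1 big1 ?addr0 // => t /negbTE ->; rewrite mulr0.
  transitivity (\sum_(t < d) (d%:R)^-1 : C).
    apply: eq_bigr => t _; rewrite mxE rmorphM /= (geC0_conj (x := sg^-1)) ?invr_ge0 //.
    rewrite mulrACA hconj mul1r -invfM -expr2 sg2 //.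
  by rewrite sumr_const card_ord -(mulr_natr (d%:R^-1)) mulVf.
have Hm : forall a b c e : 'I_d,
  \sum_(t : T) u t * (y t a 0 * y t b 0 * ((y t c 0)^* * (y t e 0)^*)) =
  ((d * d.+1)%:R)^-1 * (((a == c) && (b == e))%:R + ((a == e) && (b == c))%:R).
  move=> a b c e.
  rewrite big_sumType /=.
  rewrite [X in X + _ = _](_ : _ = ((d * d.+1)%:R)^-1 * ((b == a) * ((c == a) * (e == a)))%:R); last first.
    under eq_bigr do rewrite !mxE !rmorph_nat.
    rewrite (bigD1 a) //= eqxx mul1r big1 ?addr0 ?natrM //.
    by move=> i /negbTE; rewrite eq_sym => ->; rewrite !mul0r mulr0.
  rewrite [X in _ + X = _](_ : _ = ((d * d.+1)%:R)^-1 * ([forall t, 4 %| mm a b c e t]%N)%:R); last first.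
    transitivity (d%:R / (d.+1%:R * (4 ^ d)%:R) * (sg ^+ 2)^-1 * (sg ^+ 2)^-1 *
      \sum_(f : {ffun 'I_d -> 'I_4})
        'i ^+ (f a) * 'i ^+ (f b) * (('i ^+ (f c))^* * ('i ^+ (f e))^*)).
      rewrite mulr_sumr; apply: eq_bigr => f _.
      rewrite !mxE !rmorphM /= (geC0_conj (x := sg^-1)) ?invr_ge0 //.
      rewrite -!exprVn; ring.
    rewrite phase_sum sg2 natrM natrX.
    have h4 : ((4 : C) ^+ d != 0) by rewrite expf_neq0 // pnatr_eq0.
    by field; rewrite h4 hdC addrC natr1 pnatr_eq0.
  rewrite -mulrDr -!natrD; congr (_ * _%:R).
  have HF : [forall t, 4 %| mm a b c e t]%N = ((a == c) && (b == e)) || ((a == e) && (b == c)).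
    by apply/forallP/idP; [exact: comb1 | exact: comb2].
  by rewrite HF comb3.
exists #|{: 'I_d + {ffun 'I_d -> 'I_4}}|, (fun k => y (enum_val k)).
apply/design_iff; split; first by move=> k; apply: Hu.
exists (fun k => u (enum_val k)).
have Hw : forall t, 0 <= u t.
  case=> [i|f] /=; first by rewrite invr_ge0 ler0n.
  by rewrite divr_ge0 ?mulr_ge0 ?ler0n.
match goal with |- _ /\ _ /\ ?M => have Hmom : M end.
  move=> a b c e; rewrite -Hm.
  exact: (reindex (fun t => u t * (y t a 0 * y t b 0 * ((y t c 0)^* * (y t e 0)^*)))).
split; first by move=> k; apply: Hw.
split=> //; apply: mom_sum hd _ Hmom => k; exact: Hu.
Qed.


Lemma ex_min_nat (P : nat -> Prop) : (exists n, P n) -> exists n, is_min_nat P n.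
Proof.
move=> [n Pn].
suff H : forall N n, (n <= N)%N -> P n -> exists m, is_min_nat P m by exact: (H n n).
elim=> [|N IH] m hm Pm.
  exists m; split=> // n' _; move: hm; rewrite leqn0 => /eqP ->; exact: leq0n.
case: (classic (exists n', P n' /\ (n' < m)%N)) => [[n' [Pn' lt]] | H].
  by apply: (IH n') => //; rewrite -ltnS (leq_trans lt hm).
exists m; split=> // n' Pn'; rewrite leqNgt; apply/negP => lt.
by apply: H; exists n'.
Qed.

Local Open Scope complex_scope.

Theorem theorem1 (R : realType) (d : nat) (hd : (0 < d)%N) :
  exists n : nat,
    is_min_nat (fun n' => exists x : 'I_n' -> 'cV[R[i]]_d,
                            weighted_proj_2design x) n /\
    is_ebr (@Zmap R[i] d) n.
Proof.
have Heq : forall n, (exists x : 'I_n -> 'cV[R[i]]_d, weighted_proj_2design x) <->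
    (exists Rk : 'I_n -> 'M[R[i]]_d, eb_decomposition (@Zmap R[i] d) Rk).
  move=> n; split; first by case=> x Hx; exact: design_to_eb hd Hx.
  by case=> Rk HR; exact: eb_to_design hd HR.
have [n0 [H1 H2]] : exists n, is_min_nat (fun n' => exists x : 'I_n' -> 'cV[R[i]]_d,
                            weighted_proj_2design x) n.
  apply: ex_min_nat; have [n [x Hx]] := design_exists (R[i]) hd.
  by exists n, x.
exists n0; split; first by split.
split; first by apply/Heq.
by move=> n' /Heq; exact: H2.
Qed.
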